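(* Let $p$ be prime, $\mathbb{F}=\mathbb{F}_p$, $n\le N$, and let $\lambda=(\lambda_0,\lambda_1,\dots,\lambda_k)$ be an ordered partition of $[n]$ into pairwise disjoint, possibly empty sets. For $y_1,\dots,y_k\in\mathbb{F}^N$ let $P(x)=\mathcal{F}_{\lambda}(x,y_1,\dots,y_k)$. Then for every $z\in\mathbb{F}^N$, $$P_z(x)=\sum_{A\subseteq\lambda_0,\ A\ne\lambda_0}\mathcal{F}_{(A,\lambda_0\setminus A,\lambda_1,\dots,\lambda_k)}(x,z,y_1,\dots,y_k).$$
   Context: For an ordered partition $\mu=(\mu_0,\dots,\mu_k)$ of $[n]$ (blocks pairwise disjoint, possibly empty, union $[n]$) and vectors $r_0,\dots,r_k\in\mathbb{F}^N$, define $\mathcal{F}_{\mu}(r_0,\dots,r_k)=\sum_{1\le j_1<j_2<\dots<j_n\le N}\prod_{i=1}^n w_i(j_i)$, where $w_i=r_t$ for the unique $t$ with $i\in\mu_t$, and $r(j)$ denotes the $j$-th coordinate of $r$. The derivative is $P_z(x)=P(x+z)-P(x)$. *)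

(* Defs.v *)
From HB Require Import structures.
From mathcomp Require Import all_boot all_order all_algebra.
Set Implicit Arguments. Unset Strict Implicit. Unset Printing Implicit Defensive.
Import GRing.Theory.
Local Open Scope ring_scope.

Definition scons (T : Type) (k : nat) (a : T) (f : 'I_k -> T) : 'I_k.+1 -> T :=
  fun t => match unlift ord0 t with None => a | Some t' => f t' end.

Definition blk (n k : nat) (mu : 'I_k.+1 -> {set 'I_n}) (i : 'I_n) : 'I_k.+1 :=
  odflt ord0 [pick t | i \in mu t].

Definition ord_partition (n k : nat) (mu : 'I_k.+1 -> {set 'I_n}) : Prop :=
  (forall t t', t != t' -> [disjoint mu t & mu t']) /\
  (\bigcup_(t < k.+1) mu t = [set: 'I_n]).

(* F_mu(r_0,...,r_k) = sum over 1 <= j_1 < ... < j_n <= N of prod_i w_i(j_i),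
   with w_i = r_t for i in mu_t.  Coordinates are 0-indexed. *)
Definition Fmu (R : comRingType) (n N k : nat) (mu : 'I_k.+1 -> {set 'I_n})
    (r : 'I_k.+1 -> 'rV[R]_N) : R :=
  \sum_(j : {ffun 'I_n -> 'I_N} |
        [forall i : 'I_n, forall i' : 'I_n, (i < i')%N ==> (j i < j i')%N])
    \prod_(i < n) r (blk mu i) 0 (j i).

(* Main.v *)
Require Import Defs.
From mathcomp Require Import all_boot all_order all_algebra.
Set Implicit Arguments. Unset Strict Implicit. Unset Printing Implicit Defensive.
Import GRing.Theory.
Local Open Scope ring_scope.

Lemma scons0 T k (a : T) (f : 'I_k -> T) : scons a f ord0 = a.
Proof. by rewrite /scons unlift_none. Qed.
Lemma sconsL T k (a : T) (f : 'I_k -> T) s : scons a f (lift ord0 s) = f s.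
Proof. by rewrite /scons liftK. Qed.

Lemma blk_eq n k (mu : 'I_k.+1 -> {set 'I_n}) i t :
  (forall s, (i \in mu s) = (s == t)) -> blk mu i = t.
Proof.
move=> H; rewrite /blk; case: pickP => [s|] /=.
  by rewrite H => /eqP.
by move=> /(_ t); rewrite H eqxx.
Qed.

Lemma blk_part n k (mu : 'I_k.+1 -> {set 'I_n}) i t :
  ord_partition mu -> (i \in mu t) = (t == blk mu i).
Proof.
case=> hd hc.
have [t0 ht0]: exists t0, i \in mu t0.
  have : i \in \bigcup_(t < k.+1) mu t by rewrite hc inE.
  by case/bigcupP => t0 _ h; exists t0.
have uniq : forall s, i \in mu s -> s = t0.
  move=> s hs; apply/eqP; apply/negPn/negP => ne.
  by move: (hd _ _ ne) => /disjointFr /(_ hs); rewrite ht0.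
rewrite (blk_eq (t := t0)); last first.
  by move=> s; apply/idP/eqP => [/uniq //|->].
by apply/idP/eqP => [/uniq //|->].
Qed.

Lemma lift0F m (s : 'I_m) : (lift ord0 s == ord0 :> 'I_m.+1) = false.
Proof. by apply/negbTE; rewrite eq_sym neq_lift. Qed.

Lemma scons_ne T k (a b : T) (f : 'I_k -> T) t : t != ord0 -> scons a f t = scons b f t.
Proof. by case: (unliftP ord0 t) => [t'|] ->; rewrite ?eqxx // !sconsL. Qed.

Lemma scons_tail n k (lam : 'I_k.+1 -> {set 'I_n}) (B : {set 'I_n}) s :
  scons B (fun t : 'I_k => lam (lift ord0 t)) s = if s == ord0 then B else lam s.
Proof. by case: (unliftP ord0 s) => [s'|] ->; rewrite ?eqxx ?scons0 // sconsL eq_sym (negbTE (neq_lift _ _)). Qed.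

Section Main.
Variables (R : comRingType) (n N k : nat) (lam : 'I_k.+1 -> {set 'I_n}).
Hypothesis hlam : ord_partition lam.
Variables (y : 'I_k -> 'rV[R]_N) (z x : 'rV[R]_N) (j : 'I_n -> 'I_N).

Let L0 := lam ord0.
Let c i := scons x y (blk lam i) 0 (j i).

Lemma val_lam v i : scons v y (blk lam i) 0 (j i) = if i \in L0 then v 0 (j i) else c i.
Proof.
rewrite /L0 (blk_part _ _ hlam) /c.
case: (unliftP ord0 (blk lam i)) => [t'|] ->; last by rewrite eqxx !scons0.
by rewrite (negbTE (neq_lift _ _)) !sconsL.
Qed.

Lemma val_mu (A : {set 'I_n}) i : A \subset L0 ->
  scons x (scons z y)
    (blk (scons A (scons (L0 :\: A) (fun t : 'I_k => lam (lift ord0 t)))) i) 0 (j i)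
  = if i \in A then x 0 (j i) else if i \in L0 then z 0 (j i) else c i.
Proof.
move=> hA.
set mu := scons A _.
have m0 : (i \in mu ord0) = (i \in A) by rewrite /mu scons0.
have mL : forall s, (i \in mu (lift ord0 s)) =
     if s == ord0 then (i \in L0) && (i \notin A) else (s == blk lam i).
  move=> s; rewrite /mu sconsL scons_tail; case: ifP => _; first by rewrite inE andbC.
  exact: blk_part.
have hL0 : (i \in L0) = (ord0 == blk lam i) by rewrite /L0 (blk_part _ _ hlam).
case hiA: (i \in A).
  have hi0 : i \in L0 by apply: (subsetP hA).
  rewrite (@blk_eq _ _ mu i ord0) ?scons0 //.
  move=> s; case: (unliftP ord0 s) => [s'|] ->; last by rewrite m0 hiA eqxx.
  rewrite mL hiA andbF lift0F.
  have hb : blk lam i = ord0 by apply/eqP; rewrite eq_sym -hL0.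
  by rewrite hb; case: ifP.
case hiL: (i \in L0).
  rewrite (@blk_eq _ _ mu i (lift ord0 ord0)) ?sconsL ?scons0 //.
  move=> s; case: (unliftP ord0 s) => [s'|] ->.
    rewrite mL hiA hiL (inj_eq (@lift_inj _ _)).
    have hb : blk lam i = ord0 by apply/eqP; rewrite eq_sym -hL0.
    by rewrite hb; case: ifP => // /eqP ->.
  by rewrite m0 hiA eq_sym lift0F.
have hne : blk lam i != ord0 by rewrite eq_sym -hL0 hiL.
rewrite (@blk_eq _ _ mu i (lift ord0 (blk lam i))) ?sconsL /c.
  by rewrite (scons_ne z x y hne).
move=> s; case: (unliftP ord0 s) => [s'|] ->.
  rewrite mL hiL (inj_eq (@lift_inj _ _)).
  by case: ifP => // /eqP ->; rewrite eq_sym (negbTE hne).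
by rewrite m0 hiA eq_sym lift0F.
Qed.

Lemma perj :
  \prod_(i < n) scons (x + z) y (blk lam i) 0 (j i)
  - \prod_(i < n) scons x y (blk lam i) 0 (j i)
  = \sum_(A : {set 'I_n} | A \proper L0)
     \prod_(i < n) scons x (scons z y)
       (blk (scons A (scons (L0 :\: A) (fun t : 'I_k => lam (lift ord0 t)))) i) 0 (j i).
Proof.
under eq_bigr => i _ do rewrite val_lam.
under [in X in _ - X]eq_bigr => i _ do rewrite val_lam.
under [in RHS]eq_bigr => A hA do under eq_bigr => i _ do rewrite val_mu ?(proper_sub hA) //.
set F := fun i => if i \in L0 then x 0 (j i) else 0.
set G := fun i => if i \in L0 then z 0 (j i) else c i.
have -> : \prod_(i < n) (if i \in L0 then (x + z) 0 (j i) else c i)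
        = \prod_(i < n) (F i + G i).
  by apply: eq_bigr => i _; rewrite /F /G mxE; case: ifP; rewrite ?add0r.
have -> : \prod_(i < n) (F i + G i)
   = \sum_(J : {set 'I_n}) \prod_(i < n) (if i \in J then F i else G i).
  by rewrite bigA_distr.
rewrite [\sum_(J : {set 'I_n}) _](bigID (fun J : {set 'I_n} => J \subset L0)) /=.
rewrite [X in _ + X - _]big1 ?addr0; last first.
  move=> J /subsetPn [i hiJ hiL].
  by rewrite (bigD1 i) //= hiJ /F (negbTE hiL) mul0r.
rewrite (bigD1 L0) /=; last by rewrite subxx.
have -> : \prod_(i < n) (if i \in L0 then F i else G i)
        = \prod_(i < n) (if i \in L0 then x 0 (j i) else c i).
  by apply: eq_bigr => i _; rewrite /F /G; case: (i \in L0).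
rewrite addrC addrK.
apply: congr_big => // [A|A].
  by rewrite properEneq andbC.
move=> /andP [hA _]; apply: eq_bigr => i _.
rewrite /F /G; case: ifP => // hiA.
by rewrite (subsetP hA _ hiA).
Qed.

End Main.

Theorem lemma2p1 (p : nat) (pp : prime p) (n N k : nat) (nN : (n <= N)%N)
    (lam : 'I_k.+1 -> {set 'I_n}) (hlam : ord_partition lam)
    (y : 'I_k -> 'rV['F_p]_N) (z x : 'rV['F_p]_N) :
  let P := fun v : 'rV['F_p]_N => Fmu lam (scons v y) in
  P (x + z) - P x =
  \sum_(A : {set 'I_n} | A \proper lam ord0)
     Fmu (scons A (scons (lam ord0 :\: A) (fun t : 'I_k => lam (lift ord0 t))))
         (scons x (scons z y)).
Proof.
move=> P; rewrite /P /Fmu -sumrB exchange_big /=.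
apply: eq_bigr => j _.
exact: perj.
Qed.
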